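(* Let $P,Q\in\Gamma_n$ and $0<r\le R$ with $r\le p_i/q_i\le R$ for all $i$. Let $s,t\in\mathbb{R}$. If $s+t\le1$ and $t\le-1$, then $$\frac{1}{4r^{t+1}}\Big(\frac{r+1}{2r}\Big)^{s-2}\Phi_t(P\|Q)\le\Omega_s(P\|Q)\le\frac{1}{4R^{t+1}}\Big(\frac{R+1}{2R}\Big)^{s-2}\Phi_t(P\|Q).$$ If $s+t\ge1$ and $t\ge-1$, then $$\frac{1}{4R^{t+1}}\Big(\frac{R+1}{2R}\Big)^{s-2}\Phi_t(P\|Q)\le\Omega_s(P\|Q)\le\frac{1}{4r^{t+1}}\Big(\frac{r+1}{2r}\Big)^{s-2}\Phi_t(P\|Q).$$
   Context: $\Gamma_n=\{P=(p_1,\dots,p_n): p_i>0,\ \sum_i p_i=1\}$, $n\ge2$. For $P,Q\in\Gamma_n$ and $s\in\mathbb{R}$: $\Phi_s(P\|Q)=[s(s-1)]^{-1}\big[\sum_i p_i^s q_i^{1-s}-1\big]$ for $s\ne0,1$; $\Phi_0(P\|Q)=\sum_i q_i\ln(q_i/p_i)$; $\Phi_1(P\|Q)=\sum_i p_i\ln(p_i/q_i)$. $\Omega_s(P\|Q)=[s(s-1)]^{-1}\big[\sum_i p_i\big(\frac{p_i+q_i}{2p_i}\big)^s-1\big]$ for $s\ne0,1$; $\Omega_0(P\|Q)=\sum_i p_i\ln\frac{2p_i}{p_i+q_i}$; $\Omega_1(P\|Q)=\sum_i\frac{p_i+q_i}{2}\ln\frac{p_i+q_i}{2p_i}$. *)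

(* Defs.v *)
From Stdlib Require Import Reals.
Open Scope R_scope.

Fixpoint sumn (n : nat) (f : nat -> R) : R :=
  match n with
  | O => 0
  | S k => sumn k f + f k
  end.

Definition in_Gamma (n : nat) (p : nat -> R) : Prop :=
  (forall i, (i < n)%nat -> 0 < p i) /\ sumn n p = 1.

Definition Phi (n : nat) (s : R) (p q : nat -> R) : R :=
  if Req_EM_T s 0 then sumn n (fun i => q i * ln (q i / p i))
  else if Req_EM_T s 1 then sumn n (fun i => p i * ln (p i / q i))
  else / (s * (s - 1)) *
       (sumn n (fun i => Rpower (p i) s * Rpower (q i) (1 - s)) - 1).

Definition Omega (n : nat) (s : R) (p q : nat -> R) : R :=
  if Req_EM_T s 0 then sumn n (fun i => p i * ln (2 * p i / (p i + q i)))
  else if Req_EM_T s 1 then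
    sumn n (fun i => (p i + q i) / 2 * ln ((p i + q i) / (2 * p i)))
  else / (s * (s - 1)) *
       (sumn n (fun i => p i * Rpower ((p i + q i) / (2 * p i)) s) - 1).

(* Main.v *)
Require Import Defs.
From Stdlib Require Import Reals Lra Lia.
From Coquelicot Require Import Coquelicot.
Open Scope R_scope.

Lemma sumn_ext n f g : (forall i, (i < n)%nat -> f i = g i) -> sumn n f = sumn n g.
Proof.
  induction n; intros h; simpl; auto.
  rewrite IHn by (intros; apply h; lia). rewrite h by lia. auto.
Qed.

Lemma sumn_le n f g : (forall i, (i < n)%nat -> f i <= g i) -> sumn n f <= sumn n g.
Proof.
  induction n; intros h; simpl; [lra|].
  assert (sumn n f <= sumn n g) by (apply IHn; intros; apply h; lia).
  assert (f n <= g n) by (apply h; lia). lra.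
Qed.

Lemma sumn_lt n f g : (0 < n)%nat -> (forall i, (i < n)%nat -> f i < g i) -> sumn n f < sumn n g.
Proof.
  intros hn h. destruct n; [lia|]. simpl.
  assert (sumn n f <= sumn n g) by (apply sumn_le; intros; apply Rlt_le, h; lia).
  assert (f n < g n) by (apply h; lia). lra.
Qed.

Lemma sumn_lin n c a b : sumn n (fun i => c * (a i - b i)) = c * (sumn n a - sumn n b).
Proof. induction n; simpl; [ring|]. rewrite IHn. ring. Qed.

Lemma sumn_sub n c a b : sumn n (fun i => a i - c * b i) = sumn n a - c * sumn n b.
Proof. induction n; simpl; [ring|]. rewrite IHn. ring. Qed.

Lemma r_le_1 n p q r RR : (0 < n)%nat -> in_Gamma n p -> in_Gamma n q ->
  (forall i, (i < n)%nat -> r <= p i / q i <= RR) -> r <= 1 <= RR.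
Proof.
  intros hn [pp sp] [pq sq] h. split.
  - destruct (Rle_dec r 1) as [|hr]; auto. exfalso.
    assert (sumn n q < sumn n p); [|lra].
    apply sumn_lt; auto. intros i hi. specialize (h i hi). specialize (pp i hi). specialize (pq i hi).
    destruct h as [h _]. apply (Rmult_le_compat_r (q i)) in h; [|lra].
    unfold Rdiv in h. rewrite Rmult_assoc, Rinv_l in h by lra. nra.
  - destruct (Rle_dec 1 RR) as [|hr]; auto. exfalso.
    assert (sumn n p < sumn n q); [|lra].
    apply sumn_lt; auto. intros i hi. specialize (h i hi). specialize (pp i hi). specialize (pq i hi).
    destruct h as [_ h]. apply (Rmult_le_compat_r (q i)) in h; [|lra].
    unfold Rdiv in h. rewrite Rmult_assoc, Rinv_l in h by lra. nra.
Qed.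

Lemma cont_of (f df : R -> R) x : is_derive f x (df x) -> continuity_pt f x.
Proof.
  intro H. apply continuity_pt_filterlim. apply (@ex_derive_continuous R_AbsRing R_NormedModule). exists (df x); exact H.
Qed.

Lemma tangent (H H1 H2 : R -> R) r R0 x :
 0 < r -> r <= 1 <= R0 -> r <= x <= R0 ->
 (forall y, 0 < y -> is_derive H y (H1 y)) ->
 (forall y, 0 < y -> is_derive H1 y (H2 y)) ->
 (forall y, r <= y <= R0 -> 0 <= H2 y) ->
 H 1 + H1 1 * (x - 1) <= H x.
Proof.
  intros hr h1 hx dH dH1 pos.
  destruct (MVT_gen H 1 x H1) as [c [hc ec]].
  { intros y hy. apply dH. unfold Rmin, Rmax in hy. destruct Rle_dec; lra. }
  { intros y hy. apply (cont_of H H1). apply dH. unfold Rmin, Rmax in hy. destruct Rle_dec; lra. }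
  assert (hc' : r <= c <= R0 /\ 0 <= (c - 1) * (x - 1)).
  { unfold Rmin, Rmax in hc. destruct Rle_dec; split; try nra; lra. }
  destruct (MVT_gen H1 1 c H2) as [d [hd ed]].
  { intros y hy. apply dH1. unfold Rmin, Rmax in hy. destruct Rle_dec; lra. }
  { intros y hy. apply (cont_of H1 H2). apply dH1. unfold Rmin, Rmax in hy. destruct Rle_dec; lra. }
  assert (hd' : r <= d <= R0).
  { unfold Rmin, Rmax in hd. destruct Rle_dec; lra. }
  specialize (pos d hd').
  assert (H x - H 1 - H1 1 * (x - 1) = H2 d * ((c - 1) * (x - 1))) by nra.
  assert (0 <= H2 d * ((c - 1) * (x - 1))) by (apply Rmult_le_pos; lra).
  lra.
Qed.

Definition Fs s x := if Req_EM_T s 0 then x * ln (2 * x / (x + 1))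
  else if Req_EM_T s 1 then (x + 1) / 2 * ln ((x + 1) / (2 * x))
  else / (s * (s - 1)) * (x * Rpower ((x + 1) / (2 * x)) s - 1).
Definition F1s s x := if Req_EM_T s 0 then ln (2 * x / (x + 1)) + / (x + 1)
  else if Req_EM_T s 1 then / 2 * ln ((x + 1) / (2 * x)) - / (2 * x)
  else Rpower ((x + 1) / (2 * x)) s * (x + 1 - s) / ((x + 1) * (s * (s - 1))).
Definition F2s s x := Rpower ((x + 1) / (2 * x)) s / (x * (x + 1) ^ 2).

Definition Gt t x := if Req_EM_T t 0 then - ln x
  else if Req_EM_T t 1 then x * ln x
  else / (t * (t - 1)) * (Rpower x t - 1).
Definition G1t t x := if Req_EM_T t 0 then - / x
  else if Req_EM_T t 1 then ln x + 1
  else Rpower x t / ((t - 1) * x).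
Definition G2t t x := Rpower x t / x ^ 2.

Ltac side := repeat split; try lra;
  try (apply Rmult_lt_0_compat; [lra | apply Rinv_0_lt_compat; lra]);
  try (repeat apply Rmult_integral_contrapositive_currified; lra).

Lemma dF s x : 0 < x -> is_derive (Fs s) x (F1s s x).
Proof.
  intro hx. unfold Fs, F1s, Rpower.
  destruct (Req_EM_T s 0); [|destruct (Req_EM_T s 1)];
  (auto_derive; [side | unfold Rdiv; field; side]).
Qed.

Lemma dF1 s x : 0 < x -> is_derive (F1s s) x (F2s s x).
Proof.
  intro hx. unfold F2s, F1s, Rpower.
  destruct (Req_EM_T s 0); [|destruct (Req_EM_T s 1)].
  - subst. rewrite Rmult_0_l, exp_0.
    auto_derive; [side | unfold Rdiv; field; side].
  - subst. rewrite Rmult_1_l, exp_ln by (apply Rdiv_lt_0_compat; lra).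
    auto_derive; [side | unfold Rdiv; field; side].
  - auto_derive; [side | unfold Rdiv; field; side].
Qed.

Lemma dG t x : 0 < x -> is_derive (Gt t) x (G1t t x).
Proof.
  intro hx. unfold Gt, G1t, Rpower.
  destruct (Req_EM_T t 0); [|destruct (Req_EM_T t 1)];
  (auto_derive; [side | unfold Rdiv; field; side]).
Qed.

Lemma dG1 t x : 0 < x -> is_derive (G1t t) x (G2t t x).
Proof.
  intro hx. unfold G2t, G1t, Rpower.
  destruct (Req_EM_T t 0); [|destruct (Req_EM_T t 1)].
  - subst. rewrite Rmult_0_l, exp_0.
    auto_derive; [side | unfold Rdiv; field; side].
  - subst. rewrite Rmult_1_l, exp_ln by lra.
    auto_derive; [side | unfold Rdiv; field; side].
  - auto_derive; [side | unfold Rdiv; field; side].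
Qed.

Lemma ln_le' x y : 0 < x -> x <= y -> ln x <= ln y.
Proof. intros hx h. destruct (Req_dec x y). subst; lra. apply Rlt_le, ln_increasing; lra. Qed.
Lemma exp_le' x y : x <= y -> exp x <= exp y.
Proof. intros h. destruct (Req_dec x y). subst; lra. apply Rlt_le, exp_increasing; lra. Qed.

Definition rho s t x := / (4 * Rpower x (t + 1)) * Rpower ((x + 1) / (2 * x)) (s - 2).
Definition ell s t x := - (t + 1) * ln (x + 1) + (s + t - 1) * (ln (x + 1) - ln x).

Lemma rho_exp s t x : 0 < x -> rho s t x = / 4 * exp (- (s - 2) * ln 2 + ell s t x).
Proof.
  intro hx. unfold rho, ell, Rpower.
  unfold Rdiv. rewrite ln_mult, ln_Rinv, ln_mult by first [lra | apply Rinv_0_lt_compat; lra].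
  rewrite Rinv_mult, <- exp_Ropp, Rmult_assoc, <- exp_plus.
  f_equal. f_equal. ring.
Qed.

Lemma ell_mono x y : 0 < x -> x <= y ->
  (ln (y + 1) - ln y <= ln (x + 1) - ln x) /\ ln (x + 1) <= ln (y + 1).
Proof.
  intros hx h. split; [| apply ln_le'; lra].
  assert (ln (x * (y + 1)) <= ln (y * (x + 1))) by (apply ln_le'; nra).
  rewrite !ln_mult in H by lra. lra.
Qed.

Lemma rho_incr s t x y : t <= -1 -> s + t <= 1 -> 0 < x -> x <= y -> rho s t x <= rho s t y.
Proof.
  intros h1 h2 hx h. rewrite !rho_exp by lra.
  apply Rmult_le_compat_l; [lra|]. apply exp_le'.
  destruct (ell_mono x y hx h). unfold ell. nra.
Qed.

Lemma rho_decr s t x y : t >= -1 -> s + t >= 1 -> 0 < x -> x <= y -> rho s t y <= rho s t x.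
Proof.
  intros h1 h2 hx h. rewrite !rho_exp by lra.
  apply Rmult_le_compat_l; [lra|]. apply exp_le'.
  destruct (ell_mono x y hx h). unfold ell. nra.
Qed.

Lemma rho_G2 s t x : 0 < x -> F2s s x = rho s t x * G2t t x.
Proof.
  intro hx. unfold F2s, rho, G2t, Rpower.
  replace ((s - 2) * ln ((x + 1) / (2 * x))) with (s * ln ((x + 1) / (2 * x)) + - (ln ((x + 1) / (2 * x)) + ln ((x + 1) / (2 * x)))) by ring.
  replace ((t + 1) * ln x) with (t * ln x + ln x) by ring.
  rewrite !exp_plus, exp_Ropp, exp_plus, !exp_ln by first [lra | apply Rdiv_lt_0_compat; lra].
  assert (0 < exp (t * ln x)) by apply exp_pos.
  field. repeat split; lra.
Qed.

Lemma F_1 s : Fs s 1 = 0.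
Proof.
  unfold Fs. replace (2 * 1 / (1 + 1)) with 1 by field. replace ((1 + 1) / (2 * 1)) with 1 by field.
  rewrite ln_1. unfold Rpower. rewrite ln_1, !Rmult_0_r, exp_0.
  destruct Req_EM_T; [ring|]. destruct Req_EM_T; ring.
Qed.

Lemma G_1 t : Gt t 1 = 0.
Proof.
  unfold Gt. unfold Rpower. rewrite ln_1, !Rmult_0_r, exp_0.
  destruct Req_EM_T; [ring|]. destruct Req_EM_T; ring.
Qed.

Lemma dlin1 f g a b m x : is_derive f x a -> is_derive g x b ->
  is_derive (fun y => f y - m * g y) x (a - m * b).
Proof. intros. apply (is_derive_minus f (fun y => m * g y)); auto. apply is_derive_scal; auto. Qed.

Lemma dlin2 f g a b m x : is_derive f x a -> is_derive g x b ->
  is_derive (fun y => m * g y - f y) x (m * b - a).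
Proof. intros. apply (is_derive_minus (fun y => m * g y) f); auto. apply is_derive_scal; auto. Qed.

Lemma sum_H n p q r R0 (H H1 H2 : R -> R) : (0 < n)%nat -> in_Gamma n p -> in_Gamma n q -> 0 < r ->
  (forall i, (i < n)%nat -> r <= p i / q i <= R0) ->
  (forall y, 0 < y -> is_derive H y (H1 y)) ->
  (forall y, 0 < y -> is_derive H1 y (H2 y)) ->
  (forall y, r <= y <= R0 -> 0 <= H2 y) -> H 1 = 0 ->
  0 <= sumn n (fun i => q i * H (p i / q i)).
Proof.
  intros hn gp gq hr hb dH dH1 pos h1.
  pose proof (r_le_1 n p q r R0 hn gp gq hb) as h01.
  destruct gp as [pp sp]. destruct gq as [pq sq].
  assert (e : sumn n (fun i => H1 1 * (p i - q i)) = 0) by (rewrite sumn_lin, sp, sq; ring).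
  rewrite <- e. apply sumn_le. intros i hi.
  pose proof (tangent H H1 H2 r R0 (p i / q i) hr h01 (hb i hi) dH dH1 pos) as ht.
  specialize (pp i hi). specialize (pq i hi).
  rewrite h1 in ht. apply (Rmult_le_compat_l (q i)) in ht; [|lra].
  replace (H1 1 * (p i - q i)) with (q i * (0 + H1 1 * (p i / q i - 1))) by (field; lra). exact ht.
Qed.

Lemma Omega_sum n s p q : (forall i, (i < n)%nat -> 0 < p i /\ 0 < q i) -> sumn n q = 1 ->
  Omega n s p q = sumn n (fun i => q i * Fs s (p i / q i)).
Proof.
  intros hpq sq. unfold Omega, Fs.
  destruct (Req_EM_T s 0); [|destruct (Req_EM_T s 1)].
  - apply sumn_ext. intros i hi. destruct (hpq i hi).
    replace (2 * (p i / q i) / (p i / q i + 1)) with (2 * p i / (p i + q i)) by (field; lra).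
    field. lra.
  - apply sumn_ext. intros i hi. destruct (hpq i hi).
    replace ((p i / q i + 1) / (2 * (p i / q i))) with ((p i + q i) / (2 * p i)) by (field; lra).
    field. lra.
  - transitivity (/ (s * (s - 1)) * (sumn n (fun i => p i * Rpower ((p i + q i) / (2 * p i)) s) - sumn n q)).
    { rewrite sq. reflexivity. }
    rewrite <- sumn_lin. apply sumn_ext. intros i hi. destruct (hpq i hi).
    replace ((p i / q i + 1) / (2 * (p i / q i))) with ((p i + q i) / (2 * p i)) by (field; lra).
    field. lra.
Qed.

Lemma Phi_sum n t p q : (forall i, (i < n)%nat -> 0 < p i /\ 0 < q i) -> sumn n q = 1 ->
  Phi n t p q = sumn n (fun i => q i * Gt t (p i / q i)).
Proof.
  intros hpq sq. unfold Phi, Gt.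
  destruct (Req_EM_T t 0); [|destruct (Req_EM_T t 1)].
  - apply sumn_ext. intros i hi. destruct (hpq i hi).
    replace (q i / p i) with (/ (p i / q i)) by (field; lra).
    rewrite ln_Rinv by (apply Rdiv_lt_0_compat; lra). ring.
  - apply sumn_ext. intros i hi. destruct (hpq i hi).
    field. lra.
  - transitivity (/ (t * (t - 1)) * (sumn n (fun i => Rpower (p i) t * Rpower (q i) (1 - t)) - sumn n q)).
    { rewrite sq. reflexivity. }
    rewrite <- sumn_lin. apply sumn_ext. intros i hi. destruct (hpq i hi).
    assert (e : Rpower (p i) t * Rpower (q i) (1 - t) = q i * Rpower (p i / q i) t).
    { unfold Rpower, Rdiv. rewrite ln_mult, ln_Rinv by first [lra | apply Rinv_0_lt_compat; lra].
      replace (q i * exp (t * (ln (p i) + - ln (q i)))) with (exp (ln (q i)) * exp (t * (ln (p i) + - ln (q i))))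
        by (rewrite exp_ln; lra).
      rewrite <- !exp_plus. f_equal. ring. }
    rewrite e. ring.
Qed.

Lemma G2_pos t y : 0 < y -> 0 < G2t t y.
Proof. intro. unfold G2t, Rpower. apply Rdiv_lt_0_compat; [apply exp_pos | apply pow_lt; lra]. Qed.

Lemma lower n p q r R0 s t m : (0 < n)%nat -> in_Gamma n p -> in_Gamma n q -> 0 < r ->
  (forall i, (i < n)%nat -> r <= p i / q i <= R0) ->
  (forall y, r <= y <= R0 -> m <= rho s t y) -> m * Phi n t p q <= Omega n s p q.
Proof.
  intros hn gp gq hr hb hm.
  assert (hpq : forall i, (i < n)%nat -> 0 < p i /\ 0 < q i)
    by (intros; split; [apply gp | apply gq]; auto).
  rewrite (Omega_sum n s p q hpq (proj2 gq)), (Phi_sum n t p q hpq (proj2 gq)).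
  assert (h := sum_H n p q r R0 (fun y => Fs s y - m * Gt t y) (fun y => F1s s y - m * G1t t y)
     (fun y => F2s s y - m * G2t t y) hn gp gq hr hb).
  assert (0 <= sumn n (fun i => q i * (Fs s (p i / q i) - m * Gt t (p i / q i)))).
  { apply h.
    - intros. apply dlin1; [apply dF | apply dG]; auto.
    - intros. apply dlin1; [apply dF1 | apply dG1]; auto.
    - intros y hy. rewrite (rho_G2 s t y) by lra. pose proof (G2_pos t y). specialize (hm y hy). nra.
    - rewrite F_1, G_1. ring. }
  assert (E : sumn n (fun i => q i * (Fs s (p i / q i) - m * Gt t (p i / q i))) =
          sumn n (fun i => q i * Fs s (p i / q i) - m * (q i * Gt t (p i / q i)))).
  { apply sumn_ext. intros. ring. }
  rewrite sumn_sub in E. lra.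
Qed.

Lemma upper n p q r R0 s t m : (0 < n)%nat -> in_Gamma n p -> in_Gamma n q -> 0 < r ->
  (forall i, (i < n)%nat -> r <= p i / q i <= R0) ->
  (forall y, r <= y <= R0 -> rho s t y <= m) -> Omega n s p q <= m * Phi n t p q.
Proof.
  intros hn gp gq hr hb hm.
  assert (hpq : forall i, (i < n)%nat -> 0 < p i /\ 0 < q i)
    by (intros; split; [apply gp | apply gq]; auto).
  rewrite (Omega_sum n s p q hpq (proj2 gq)), (Phi_sum n t p q hpq (proj2 gq)).
  assert (h := sum_H n p q r R0 (fun y => m * Gt t y - Fs s y) (fun y => m * G1t t y - F1s s y)
     (fun y => m * G2t t y - F2s s y) hn gp gq hr hb).
  assert (0 <= sumn n (fun i => q i * (m * Gt t (p i / q i) - Fs s (p i / q i)))).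
  { apply h.
    - intros. apply dlin2; [apply dF | apply dG]; auto.
    - intros. apply dlin2; [apply dF1 | apply dG1]; auto.
    - intros y hy. rewrite (rho_G2 s t y) by lra. pose proof (G2_pos t y). specialize (hm y hy). nra.
    - rewrite F_1, G_1. ring. }
  assert (E : sumn n (fun i => q i * (m * Gt t (p i / q i) - Fs s (p i / q i))) =
          - (sumn n (fun i => q i * Fs s (p i / q i) - m * (q i * Gt t (p i / q i))))).
  { clear. induction n; simpl; [ring|]. rewrite IHn. ring. }
  rewrite sumn_sub in E. lra.
Qed.

Theorem theorem4p1 (n : nat) (p q : nat -> R) (r RR s t : R) :
  (2 <= n)%nat ->
  in_Gamma n p -> in_Gamma n q ->
  0 < r -> r <= RR ->
  (forall i, (i < n)%nat -> r <= p i / q i <= RR) ->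
  (s + t <= 1 -> t <= -1 ->
     / (4 * Rpower r (t + 1)) * Rpower ((r + 1) / (2 * r)) (s - 2) * Phi n t p q
       <= Omega n s p q
     /\ Omega n s p q
       <= / (4 * Rpower RR (t + 1)) * Rpower ((RR + 1) / (2 * RR)) (s - 2) * Phi n t p q)
  /\
  (s + t >= 1 -> t >= -1 ->
     / (4 * Rpower RR (t + 1)) * Rpower ((RR + 1) / (2 * RR)) (s - 2) * Phi n t p q
       <= Omega n s p q
     /\ Omega n s p q
       <= / (4 * Rpower r (t + 1)) * Rpower ((r + 1) / (2 * r)) (s - 2) * Phi n t p q).
Proof.
  intros hn gp gq hr hrR hb.
  assert (hn' : (0 < n)%nat) by lia.
  split; intros h1 h2; split.
  - change (rho s t r * Phi n t p q <= Omega n s p q).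
    apply (lower n p q r RR); auto. intros y hy. apply rho_incr; lra.
  - change (Omega n s p q <= rho s t RR * Phi n t p q).
    apply (upper n p q r RR); auto. intros y hy. apply rho_incr; lra.
  - change (rho s t RR * Phi n t p q <= Omega n s p q).
    apply (lower n p q r RR); auto. intros y hy. apply rho_decr; lra.
  - change (Omega n s p q <= rho s t r * Phi n t p q).
    apply (upper n p q r RR); auto. intros y hy. apply rho_decr; lra.
Qed.
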